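(* For every $k\in\mathbb{N}$ and every $\alpha\in(0,1)$ there exists $\gamma_0>0$ such that for all $0<\gamma\leq\gamma_0$ the following holds. Let $G$ be a digraph on $n$ vertices and let $G_1,\dots,G_k$ be pairwise edge-disjoint subgraphs of $G$ with $\sum_{i\in[k]}e(G_i)\leq\gamma n^2$ and $\Delta^0(G_i)\leq\alpha n$ for each $i\in[k]$. Then each $G_i$ contains a path system $\mathcal{Q}_i$ such that $\bigcup_{i\in[k]}\mathcal{Q}_i$ contains no directed cycle and $e(\mathcal{Q}_i)\geq\lfloor e(G_i)/(\alpha n)\rfloor$ for all $i\in[k]$.
   Context: A path system in a digraph is a set of vertex-disjoint directed paths, identified with the subgraph formed by their vertices and edges; $e(\mathcal{Q})$ is its number of edges. $\Delta^0(H)$ is the maximum over vertices of the maximum of in- and outdegree in $H$. (The paper states the hypothesis as ''$0<\gamma\ll\alpha<1$'' with $k$ fixed beforehand, i.e. $\gamma$ sufficiently small in terms of $\alpha$ and $k$.) *)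

(* Defs.v *)
From HB Require Import structures.
From mathcomp Require Import all_boot all_order all_algebra.
Set Implicit Arguments. Unset Strict Implicit. Unset Printing Implicit Defensive.
Import Order.TTheory GRing.Theory Num.Theory.

(* A digraph on a finite vertex type V is given by its edge set
   E : {set V * V}; (x, y) \in E is the directed edge x -> y. *)

Section Digraphs.
Variable V : finType.

Definition loopless (E : {set V * V}) : Prop := forall v : V, (v, v) \notin E.

Definition outdeg (E : {set V * V}) (v : V) : nat := #|[set y | (v, y) \in E]|.
Definition indeg (E : {set V * V}) (v : V) : nat := #|[set x | (x, v) \in E]|.

Definition maxsemideg_le {R : numDomainType} (E : {set V * V}) (d : R) : Prop :=
  forall v : V, ((outdeg E v)%:R <= d)%R /\ ((indeg E v)%:R <= d)%R.

Definition dpath (E : {set V * V}) (p : seq V) : bool :=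
  if p is x :: s then uniq p && path (fun a b => (a, b) \in E) x s else false.

Definition path_edges (p : seq V) : {set V * V} :=
  [set e | e \in zip p (behead p)].

(* a path system in E: a family of pairwise vertex-disjoint directed paths
   (uniq of the concatenation = distinct vertices within and across paths) *)
Definition path_system (E : {set V * V}) (P : seq (seq V)) : bool :=
  all (dpath E) P && uniq (flatten P).

(* the edge set of a path system (its subgraph); e(Q) = #|ps_edges P| *)
Definition ps_edges (P : seq (seq V)) : {set V * V} :=
  \bigcup_(p <- P) path_edges p.

Definition has_dcycle (E : {set V * V}) : Prop :=
  exists c : seq V, [&& 0 < size c, uniq c & cycle (fun x y => (x, y) \in E) c].

End Digraphs.

(* Main.v *)
Require Import Defs.
From HB Require Import structures.
From mathcomp Require Import all_boot all_order all_algebra.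
From mathcomp Require Import reals.
From mathcomp Require Import zify ring lra.
Import Order.TTheory GRing.Theory Num.Theory.

Module Part0.
Set Implicit Arguments. Unset Strict Implicit. Unset Printing Implicit Defensive.

Section Graph.
Variable V : finType.
Implicit Types (U F E : {set V * V}).

Definition touched U : {set V} := [set e.1 | e in U] :|: [set e.2 | e in U].

Lemma card_touched U : #|touched U| <= 2 * #|U|.
Proof.
rewrite /touched cardsU mul2n -addnn.
apply: leq_trans (leq_subr _ _) _.
by apply: leq_add; apply: leq_imset_card.
Qed.

Lemma untouchedP U v : v \notin touched U -> forall e, e \in U -> (e.1 != v) && (e.2 != v).
Proof.
move=> hv e he; apply/andP; split; apply/eqP=> ev; move: hv; rewrite !inE -ev.
  by rewrite (imset_f (fun e : V * V => e.1) he).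
by rewrite (imset_f (fun e : V * V => e.2) he) orbT.
Qed.

Lemma has_dcycle_sub E F : E \subset F -> has_dcycle E -> has_dcycle F.
Proof.
move=> sEF [c /and3P [c0 uc cc]]; exists c; rewrite c0 uc /=.
by apply: sub_cycle cc => x y /= h; apply: (subsetP sEF).
Qed.

Lemma acyc_add_sink U a b : ~ has_dcycle U -> a != b -> b \notin touched U ->
  ~ has_dcycle ((a, b) |: U).
Proof.
move=> nU ab hb [c /and3P [c0 uc cc]].
case bc: (b \in c).
  have := next_cycle cc bc; rewrite /= !inE => /orP [/eqP [eba _]|hU].
    by move: ab; rewrite eba eqxx.
  by have /andP [/eqP h _] := untouchedP hb hU.
apply: nU; exists c; rewrite c0 uc /=.
refine (@sub_in_cycle _ (mem c) (fun x y => (x, y) \in (a, b) |: U) _ _ c _ cc); last by apply/allP.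
move=> x y xc yc /=; rewrite !inE; case: eqP => // -[_ yb].
by move: yc; rewrite yb bc.
Qed.

Lemma acyc_add_source U a b : ~ has_dcycle U -> a != b -> a \notin touched U ->
  ~ has_dcycle ((a, b) |: U).
Proof.
move=> nU ab ha [c /and3P [c0 uc cc]].
case ac: (a \in c).
  have := prev_cycle cc ac; rewrite /= !inE => /orP [/eqP [_ eab]|hU].
    by move: ab; rewrite eab eqxx.
  by have /andP [_ /eqP h] := untouchedP ha hU.
apply: nU; exists c; rewrite c0 uc /=.
refine (@sub_in_cycle _ (mem c) (fun x y => (x, y) \in (a, b) |: U) _ _ c _ cc); last by apply/allP.
move=> x y xc yc /=; rewrite !inE; case: eqP => // -[xa _].
by move: xc; rewrite xa ac.
Qed.

End Graph.

End Part0.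
Import Part0.

Module Part1.
Set Implicit Arguments. Unset Strict Implicit. Unset Printing Implicit Defensive.

Section Conv.
Variable V : finType.
Implicit Types (U F E : {set V * V}).

Definition degle1 F := forall v, outdeg F v <= 1 /\ indeg F v <= 1.

Lemma outdeg_sub E F v : E \subset F -> outdeg E v <= outdeg F v.
Proof.
move=> s; apply: subset_leq_card; apply/subsetP=> y; rewrite !inE; exact: (subsetP s).
Qed.
Lemma indeg_sub E F v : E \subset F -> indeg E v <= indeg F v.
Proof.
move=> s; apply: subset_leq_card; apply/subsetP=> y; rewrite !inE; exact: (subsetP s).
Qed.

Lemma out_uniq F x y y' : outdeg F x <= 1 -> (x, y) \in F -> (x, y') \in F -> y = y'.
Proof.
move=> /card_le1_eqP h h1 h2; apply: h; rewrite inE //.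
Qed.
Lemma in_uniq F x x' y : indeg F y <= 1 -> (x, y) \in F -> (x', y) \in F -> x = x'.
Proof.
move=> /card_le1_eqP h h1 h2; apply: h; rewrite inE //.
Qed.

Lemma source_exists F : F != set0 -> degle1 F -> ~ has_dcycle F ->
  exists x y, (x, y) \in F /\ indeg F x = 0.
Proof.
move=> F0 dF nc.
case: (boolP [exists e in F, indeg F e.1 == 0%N]).
  by move=> /existsP [[x y] /andP [h /eqP h']]; exists x, y.
move=> hall; exfalso; apply: nc.
have hT : forall e, e \in F -> exists w, (w, e.1) \in F.
  move=> e he; move/existsPn: hall => /(_ e); rewrite he /= => h.
  have : 0 < indeg F e.1 by rewrite lt0n.
  by move=> /card_gt0P [w]; rewrite inE => hw; exists w.
pose T := [set e.1 | e in F]; pose Hd := [set e.2 | e in F].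
have cT : #|T| = #|F|.
  apply: card_in_imset => [[a b] [a' b'] ha hb /= eab]; subst a'.
  by rewrite (out_uniq (proj1 (dF a)) ha hb).
have cH : #|Hd| = #|F|.
  apply: card_in_imset => [[a b] [a' b'] ha hb /= eab]; subst b'.
  by rewrite (in_uniq (proj2 (dF b)) ha hb).
have sTH : T \subset Hd.
  apply/subsetP=> v /imsetP [e he ->]; have [w hw] := hT e he.
  by apply/imsetP; exists (w, e.1).
have eTH : T = Hd by apply/eqP; rewrite eqEcard sTH cT cH leqnn.
pose f (v : V) := if [pick y | (v, y) \in F] is Some y then y else v.
have fT : forall v, v \in T -> (v, f v) \in F.
  move=> v /imsetP [e he ->]; rewrite /f; case: pickP => [y //|].
  by move=> /(_ e.2); rewrite -surjective_pairing he.
have fnT : forall v, v \notin T -> f v = v.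
  move=> v vT; rewrite /f; case: pickP => [y hy|//].
  by move: vT; rewrite (imset_f (fun e : V * V => e.1) hy).
have fTT : forall v, v \in T -> f v \in T.
  by move=> v /fT h; rewrite eTH; apply/imsetP; exists (v, f v).
have finj : injective f.
  move=> u v.
  case: (boolP (u \in T)) => uT; case: (boolP (v \in T)) => vT.
  - move=> e; have hu := fT u uT; have hv := fT v vT; rewrite e in hu.
    exact: (in_uniq (proj2 (dF (f v))) hu hv).
  - by rewrite (fnT v vT) => e; move: vT; rewrite -e fTT.
  - by rewrite (fnT u uT) => e; move: uT; rewrite e fTT.
  - by rewrite (fnT u uT) (fnT v vT).
have /set0Pn [e0 he0] := F0.
have x0T : e0.1 \in T by apply/imsetP; exists e0.
exists (orbit f e0.1).
have allT : all (mem T) (orbit f e0.1).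
  apply/allP=> y /trajectP [i _ ->]; elim: i => //= i IH; exact: fTT.
apply/and3P; split; [|exact: (orbit_uniq f e0.1)|]; first by case: (orbit f e0.1) (in_orbit f e0.1).
refine (@sub_in_cycle _ (mem T) (frel f) _ _ _ allT (cycle_orbit finj _)).
by move=> u w uT wT /= /eqP <-; apply: fT.
Qed.

Lemma zip_pred (a : V) s x : x \in s -> exists w, (w, x) \in zip (a :: s) s.
Proof.
elim: s a => [//|b s IH] a; rewrite inE => /orP [/eqP ->|xs].
  by exists a; rewrite /= inE eqxx.
by have [w hw] := IH b xs; exists w; rewrite /= inE hw orbT.
Qed.

Lemma ps_edges_cons (p : seq V) (P : seq (seq V)) : ps_edges (p :: P) = path_edges p :|: ps_edges P.
Proof. by rewrite /ps_edges big_cons. Qed.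

Lemma path_edges_cons (x y : V) s : path_edges [:: x, y & s] = (x, y) |: path_edges (y :: s).
Proof. by apply/setP=> e; rewrite !inE. Qed.

Lemma path_edges_sub (P : seq (seq V)) p : p \in P -> path_edges p \subset ps_edges P.
Proof.
move=> pP; rewrite /ps_edges (perm_big _ (perm_to_rem pP)) big_cons; exact: subsetUl.
Qed.

Lemma dpath_sub E F p : E \subset F -> dpath E p -> dpath F p.
Proof.
case: p => [//|x s] sEF /= /andP [-> h] /=.
by apply: sub_path h => a b; apply: (subsetP sEF).
Qed.

Lemma to_paths F : degle1 F -> ~ has_dcycle F ->
  exists P : seq (seq V), [/\ path_system F P, ps_edges P = F & all (fun p => 1 < size p) P].
Proof.
move: {-1}#|F| (leqnn #|F|) => N; elim: N F => [|N IH] F.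
  rewrite leqn0 cards_eq0 => /eqP -> _ _; exists [::]; split => //.
  by rewrite /ps_edges big_nil.
move=> cF dF nc.
case: (eqVneq F set0) => [-> | F0].
  by exists [::]; split => //; rewrite /ps_edges big_nil.
have [x [y [hxy ix]]] := source_exists F0 dF nc.
pose F' := F :\ (x, y).
have sF' : F' \subset F by apply: subsetDl.
have cF' : #|F'| <= N.
  by rewrite -ltnS; apply: leq_trans cF; rewrite /F' (cardsD1 (x, y) F) hxy.
have dF' : degle1 F'.
  move=> v; have [h1 h2] := dF v; split.
    exact: leq_trans (outdeg_sub v sF') h1.
  exact: leq_trans (indeg_sub v sF') h2.
have nc' : ~ has_dcycle F' by move=> h; apply: nc; apply: has_dcycle_sub h.
have [P' [/andP [aP' uP'] eP' sP']] := IH F' cF' dF' nc'.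
have nxy : (x, y) \notin F' by rewrite !inE eqxx.
have xy : x != y.
  apply/eqP=> exy; apply: nc; exists [:: x]; rewrite /= andbT.
  by rewrite {2}exy hxy.
have inF' : forall p e, p \in P' -> e \in zip p (behead p) -> e \in F'.
  move=> p e pP he; rewrite -eP'; apply: (subsetP (path_edges_sub pP)).
  by rewrite inE.
have xnP : x \notin flatten P'.
  apply/negP=> /flattenP [p pP xp].
  have : 1 < size p by exact: (allP sP' p pP).
  case: p pP xp => [//|a [//|b s]] pP; rewrite inE => /orP [/eqP xa | xs] _.
    subst a; have hb : (x, b) \in F' by apply: (inF' _ _ pP); rewrite /= inE eqxx.
    have hb' : (x, b) \in F := subsetP sF' _ hb.
    by move: hb; rewrite -(out_uniq (proj1 (dF x)) hxy hb') (negbTE nxy).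
  have [w hw] := zip_pred a xs.
  have : (w, x) \in F by apply: (subsetP sF'); exact: (inF' _ _ pP).
  move=> hwx; have : 0 < indeg F x by apply/card_gt0P; exists w; rewrite inE.
  by rewrite ix.
have yhead : forall p, p \in P' -> y \in p -> exists s, p = y :: s.
  move=> p pP; case: p pP => [//|a s] pP; rewrite inE => /orP [/eqP -> | ys].
    by exists s.
  have [w hw] := zip_pred a ys.
  have hwy : (w, y) \in F' by exact: (inF' _ _ pP).
  have := in_uniq (proj2 (dF y)) hxy (subsetP sF' _ hwy).
  by move=> ewx; move: hwy; rewrite -ewx (negbTE nxy).
case: (boolP (y \in flatten P')) => [/flattenP [p pP yp] | ynP].
  have [s ps] := yhead p pP yp; subst p.
  have pe := perm_to_rem pP.
  have pf := perm_flatten pe.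
  exists ((x :: y :: s) :: rem (y :: s) P'); split.
  - apply/andP; split.
      rewrite /= andbC; apply/andP; split.
        apply/allP=> q /mem_rem qP; apply: (dpath_sub sF'); exact: (allP aP' q qP).
      have := allP aP' _ pP; rewrite /= => /andP [u pa].
      have -> : x \notin y :: s.
        by apply/negP=> h; move/negP: xnP; apply; apply/flattenP; exists (y :: s).
      rewrite u hxy /=; apply: sub_path pa => a b; apply: (subsetP sF').
    change (uniq (x :: flatten ((y :: s) :: rem (y :: s) P'))).
    by rewrite cons_uniq -(perm_uniq pf) -(perm_mem pf) xnP uP'.
  - rewrite ps_edges_cons path_edges_cons -setUA -ps_edges_cons.
    rewrite /ps_edges -(perm_big _ pe) -/(ps_edges P') eP' /F' setD1K //.
  - by apply/allP=> q; rewrite inE => /orP [/eqP -> //| /mem_rem]; apply: (allP sP').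
exists ([:: x; y] :: P'); split.
- apply/andP; split.
    rewrite /= andbC; apply/andP; split.
      apply/allP=> q qP; apply: (dpath_sub sF'); exact: (allP aP' q qP).
    by rewrite inE xy hxy.
  change (uniq (x :: y :: flatten P')); rewrite !cons_uniq uP' ynP inE negb_or xy /= andbT.
  by apply/negP=> h; move: xnP; rewrite h.
- rewrite ps_edges_cons eP' /F'.
  have -> : path_edges [:: x; y] = [set (x, y)] by apply/setP=> e; rewrite !inE.
  by rewrite setD1K.
- by rewrite /= sP'.
Qed.

End Conv.

End Part1.
Import Part1.

Module Part2.
Set Implicit Arguments. Unset Strict Implicit. Unset Printing Implicit Defensive.

Section Counting.
Variable V : finType.

Lemma card_tail (E : {set V * V}) (A : {set V}) :
  #|[set e in E | e.1 \in A]| = \sum_(v in A) outdeg E v.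
Proof.
rewrite -sum1_card (partition_big (fun e : V * V => e.1) (mem A)) /=; last first.
  by move=> e; rewrite inE => /andP [].
apply: eq_bigr => v vA; rewrite sum1_card /outdeg.
rewrite -[RHS](card_imset _ (fun y y' (h : (v, y) = (v, y')) => congr1 snd h)).
apply: eq_card => e; apply/idP/imsetP => [/andP [] |].
  rewrite inE => /andP [eE _] /eqP ev; exists e.2; rewrite ?inE -?ev -?surjective_pairing //.
case=> y; rewrite inE => hy ->; apply/andP; by rewrite inE hy vA /=.
Qed.

Lemma card_head (E : {set V * V}) (A : {set V}) :
  #|[set e in E | e.2 \in A]| = \sum_(v in A) indeg E v.
Proof.
rewrite -sum1_card (partition_big (fun e : V * V => e.2) (mem A)) /=; last first.
  by move=> e; rewrite inE => /andP [].
apply: eq_bigr => v vA; rewrite sum1_card /indeg.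
rewrite -[RHS](card_imset _ (fun y y' (h : (y, v) = (y', v)) => congr1 fst h)).
apply: eq_card => e; apply/idP/imsetP => [/andP [] |].
  rewrite inE => /andP [eE _] /eqP ev; exists e.1; rewrite ?inE -?ev -?surjective_pairing //.
case=> y; rewrite inE => hy ->; apply/andP; by rewrite inE hy vA /=.
Qed.

Lemma sum_outdeg_le (E : {set V * V}) (A : {set V}) : \sum_(v in A) outdeg E v <= #|E|.
Proof. rewrite -card_tail; apply: subset_leq_card; apply/subsetP=> e; rewrite inE => /andP []//. Qed.
Lemma sum_indeg_le (E : {set V * V}) (A : {set V}) : \sum_(v in A) indeg E v <= #|E|.
Proof. rewrite -card_head; apply: subset_leq_card; apply/subsetP=> e; rewrite inE => /andP []//. Qed.

End Counting.

End Part2.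
Import Part2.

Module Part3.
Set Implicit Arguments. Unset Strict Implicit. Unset Printing Implicit Defensive.

Section Core.
Variable V : finType.
Variable k : nat.
Variable G : 'I_k -> {set V * V}.
Hypothesis loopG : forall i v, (v, v) \notin G i.
Implicit Types (F : 'I_k -> {set V * V}) (X : {set V * V}).

Definition Inv (F : 'I_k -> {set V * V}) :=
  [/\ forall i, F i \subset G i, forall i, degle1 (F i) & ~ has_dcycle (\bigcup_(i < k) F i)].

Definition upd (F : 'I_k -> {set V * V}) i S := fun j => if j == i then S else F j.
Definition sumF (F : 'I_k -> {set V * V}) := \sum_(i < k) #|F i|.

Lemma sumF_gen F F' i : (forall j, j != i -> F' j = F j) -> sumF F' + #|F i| = sumF F + #|F' i|.
Proof.
move=> h; rewrite /sumF (bigD1 i) // [X in _ = X + _](bigD1 i) //=.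
have -> : \sum_(j < k | j != i) #|F' j| = \sum_(j < k | j != i) #|F j|.
  by apply: eq_bigr => j /h ->.
by rewrite -addnA addnC; congr (_ + _); rewrite addnC.
Qed.

Lemma bigcup_upd F i e : \bigcup_(j < k) upd F i (e |: F i) j = e |: \bigcup_(j < k) F j.
Proof.
rewrite (bigD1 i) //= [in RHS](bigD1 i) //= /upd eqxx -setUA; congr (_ :|: (_ :|: _)).
by apply: eq_bigr => j /negbTE ->.
Qed.

Lemma card_bigcup_le F : #|\bigcup_(i < k) F i| <= sumF F.
Proof.
rewrite /sumF; elim/big_ind2: _ => //; first by rewrite cards0.
move=> A a B b hA hB; rewrite cardsU; apply: leq_trans (leq_subr _ _) _; exact: leq_add.
Qed.

Lemma touched_le F : #|touched (\bigcup_(i < k) F i)| <= 2 * sumF F.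
Proof. apply: leq_trans (card_touched _) _; rewrite leq_mul2l card_bigcup_le orbT //. Qed.

Lemma sub_bigcup F i : F i \subset \bigcup_(j < k) F j.
Proof. exact: (bigcup_sup i). Qed.

Lemma untouched_class F i v e : v \notin touched (\bigcup_(j < k) F j) -> e \in F i ->
  (e.1 != v) && (e.2 != v).
Proof. move=> hv he; apply: (untouchedP hv); exact: (subsetP (sub_bigcup F i)). Qed.

Lemma degle1_add X a b : degle1 X -> (forall e, e \in X -> e.1 != a) ->
  (forall e, e \in X -> e.2 != b) -> degle1 ((a, b) |: X).
Proof.
move=> dX ha hb v; have [o1 i1] := dX v; split.
  case: (eqVneq v a) => [-> | va].
    rewrite /outdeg (_ : [set y | (a, y) \in (a, b) |: X] = [set b]) ?cards1 //.
    apply/setP=> y; rewrite !inE xpair_eqE eqxx /=; case: eqP => //= _.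
    by apply/negbTE/negP=> h; have := ha _ h; rewrite eqxx.
  rewrite /outdeg (_ : [set y | (v, y) \in (a, b) |: X] = [set y | (v, y) \in X]) //.
  by apply/setP=> y; rewrite !inE xpair_eqE (negbTE va).
case: (eqVneq v b) => [-> | vb].
  rewrite /indeg (_ : [set x | (x, b) \in (a, b) |: X] = [set a]) ?cards1 //.
  apply/setP=> y; rewrite !inE xpair_eqE eqxx andbT; case: eqP => //= _.
  by apply/negbTE/negP=> h; have := hb _ h; rewrite eqxx.
rewrite /indeg (_ : [set x | (x, v) \in (a, b) |: X] = [set x | (x, v) \in X]) //.
by apply/setP=> y; rewrite !inE xpair_eqE (negbTE vb) andbF.
Qed.

Lemma upd_other F i S j : j != i -> upd F i S j = F j.
Proof. by rewrite /upd => /negbTE ->. Qed.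
Lemma upd_same F i S : upd F i S i = S.
Proof. by rewrite /upd eqxx. Qed.

Lemma step F i a b : Inv F -> (a, b) \in G i ->
  (forall e, e \in F i -> e.1 != a) -> (forall e, e \in F i -> e.2 != b) ->
  (b \notin touched (\bigcup_(j < k) F j)) || (a \notin touched (\bigcup_(j < k) F j)) ->
  Inv (upd F i ((a, b) |: F i)) /\ (a, b) \notin F i.
Proof.
move=> [sG dF nc] hG ha hb ht.
have ab : a != b by apply/eqP=> eab; move: hG; rewrite eab (negbTE (loopG _ _)).
split; last by apply/negP=> h; have := ha _ h; rewrite eqxx.
split.
- move=> j; case: (eqVneq j i) => [-> | ji]; last by rewrite upd_other //; exact: sG.
  rewrite upd_same.
  by rewrite subUset sub1set hG sG.
- move=> j; case: (eqVneq j i) => [-> | ji]; last by rewrite upd_other //; exact: dF.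
  rewrite upd_same.
  exact: degle1_add.
- rewrite bigcup_upd; case/orP: ht => h.
    exact: acyc_add_sink.
  exact: acyc_add_source.
Qed.


Lemma Inv0 : Inv (fun _ => set0).
Proof.
split => //.
- by move=> i; rewrite sub0set.
- move=> i v; rewrite /outdeg /indeg; split.
    by rewrite (_ : [set _ | _] = set0) ?cards0 //; apply/setP=> x; rewrite !inE.
  by rewrite (_ : [set _ | _] = set0) ?cards0 //; apply/setP=> x; rewrite !inE.
- rewrite big1 // => -[c /and3P [c0 _ cc]].
  case: c c0 cc => [//|x s] _ cc.
  by have := next_cycle cc (mem_head x s); rewrite inE.
Qed.

Variable l : nat.
Variable m : 'I_k -> nat.

Definition Hout i := [set v | l < outdeg (G i) v].
Definition Hin i := [set v | l < indeg (G i) v].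
Definition LL i := [set e in G i | (e.1 \notin Hout i) && (e.2 \notin Hin i)].
Definition h i := #|Hout i| + #|Hin i|.
Definition r i := m i - h i.

Lemma outdeg_LL i v : outdeg (LL i) v <= l.
Proof.
case: (boolP (v \in Hout i)) => hv.
  move: hv; rewrite inE => hv.
  rewrite /outdeg (_ : [set y | (v, y) \in LL i] = set0) ?cards0 //.
  by apply/setP=> y; rewrite !inE /= hv /= andbF.
apply: leq_trans (@outdeg_sub _ _ (G i) v _) _; last by move: hv; rewrite inE -leqNgt.
by apply/subsetP=> e; rewrite inE => /andP [].
Qed.

Lemma indeg_LL i v : indeg (LL i) v <= l.
Proof.
case: (boolP (v \in Hin i)) => hv.
  move: hv; rewrite inE => hv.
  rewrite /indeg (_ : [set y | (y, v) \in LL i] = set0) ?cards0 //.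
  by apply/setP=> y; rewrite !inE /= hv /= !andbF.
apply: leq_trans (@indeg_sub _ _ (G i) v _) _; last by move: hv; rewrite inE -leqNgt.
by apply/subsetP=> e; rewrite inE => /andP [].
Qed.

Lemma bad_LL i (S : {set V}) :
  #|[set e in LL i | (e.1 \in S) || (e.2 \in S)]| <= 2 * l * #|S|.
Proof.
apply: (@leq_trans (#|[set e in LL i | e.1 \in S]| + #|[set e in LL i | e.2 \in S]|)).
  apply: leq_trans (subset_leq_card _) (leq_card_setU _ _).1.
  by apply/subsetP=> e; rewrite !inE => /andP [-> /orP [] ->]; rewrite ?orbT.
rewrite card_tail card_head mul2n -addnn mulnDl; apply: leq_add.
  by rewrite mulnC -sum_nat_const; apply: leq_sum => v _; apply: outdeg_LL.
by rewrite mulnC -sum_nat_const; apply: leq_sum => v _; apply: indeg_LL.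
Qed.

Lemma greedyA i0 F : Inv F -> F i0 = set0 -> sumF F <= k.-1 * r i0 ->
  (0 < r i0 -> 4 * k * l * r i0 <= #|LL i0| /\ 0 < #|LL i0|) ->
  forall t, t <= r i0 -> exists F',
    [/\ Inv F', forall j, j != i0 -> F' j = F j, F' i0 \subset LL i0 & #|F' i0| = t].
Proof.
move=> iF F0 sF HA; elim=> [|t IH] ht.
  by exists F; split => //; rewrite F0 ?sub0set ?cards0.
have [F1 [iF1 o1 s1 c1]] := IH (ltnW ht).
have rpos : 0 < r i0 by apply: leq_trans ht.
have [HA1 HA2] := HA rpos.
set S := touched (\bigcup_(j < k) F1 j).
have k0 : 0 < k by apply: leq_ltn_trans (ltn_ord i0).
have sS : #|S| < 2 * k * r i0.
  have := touched_le F1; have := sumF_gen o1; rewrite F0 cards0 addn0 c1 => ->.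
  rewrite -/S => cS.
  move: sF ht cS; rewrite -subn1 => sF ht cS.
  have e1 : k - 1 + 1 = k by rewrite subnK.
  have : 2 * (sumF F + t) <= 2 * ((k - 1) * r i0 + t) by rewrite leq_mul2l leq_add2r sF orbT.
  nia.
have hbad : #|[set e in LL i0 | (e.1 \in S) || (e.2 \in S)]| < #|LL i0|.
  apply: leq_ltn_trans (bad_LL i0 S) _.
  case: (posnP l) => [-> | lp]; first by rewrite muln0 mul0n.
  apply: leq_trans HA1; nia.
case: (boolP (LL i0 \subset [set e in LL i0 | (e.1 \in S) || (e.2 \in S)])).
  by move=> /subset_leq_card; rewrite leqNgt hbad.
move=> /subsetPn [e eL]; rewrite inE eL /= negb_or => /andP [e1 e2].
have eG : (e.1, e.2) \in G i0.
  by rewrite -surjective_pairing; move: eL; rewrite inE => /andP [].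
have [iF2 nF] := step iF1 eG (fun e' h => proj1 (andP (untouched_class e1 h)))
  (fun e' h => proj2 (andP (untouched_class e2 h))) (introT orP (or_introl e2)).
rewrite -surjective_pairing in iF2 nF.
exists (upd F1 i0 (e |: F1 i0)); split => //.
- by move=> j ji; rewrite upd_other // o1.
- by rewrite upd_same subUset sub1set eL s1.
- by rewrite upd_same cardsU1 nF c1.
Qed.

Lemma phaseA (HA : forall i, 0 < r i -> 4 * k * l * r i <= #|LL i| /\ 0 < #|LL i|)
  (I : {set 'I_k}) : exists F,
  [/\ Inv F, forall i, i \in I -> F i \subset LL i /\ #|F i| = r i
   & forall i, i \notin I -> F i = set0].
Proof.
have [N cI] : exists N, #|I| <= N by exists #|I|.
elim: N I cI => [|N IH] I cI.
  exists (fun _ => set0); split => //; first exact: Inv0.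
  by move=> i iI; move: cI; rewrite leqn0 cards_eq0 => /eqP I0; rewrite I0 inE in iI.
case: (set_0Vmem I) => [I0 | [j0 j0I]].
  exists (fun _ => set0); split => //; first exact: Inv0.
  by move=> i; rewrite I0 inE.
case: (@arg_maxnP _ j0 (mem I) r j0I) => i0 i0I imax.
have {}i0I : i0 \in I := i0I.
have {}imax : forall j, j \in I -> r j <= r i0 := imax.
have cI' : #|I :\ i0| <= N.
  by move: cI; rewrite (cardsD1 i0 I) i0I add1n ltnS.
have [F [iF sF oF]] := IH _ cI'.
have F0 : F i0 = set0 by apply: oF; rewrite !inE eqxx.
have sumle : sumF F <= k.-1 * r i0.
  rewrite /sumF (eq_bigr (fun i => if i \in I :\ i0 then #|F i| else 0)); last first.
    by move=> i _; case: ifP => // /negbT /oF ->; rewrite cards0.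
  rewrite -big_mkcond /=.
  apply: (@leq_trans (\sum_(i in I :\ i0) r i0)).
    apply: leq_sum => i iI; rewrite (proj2 (sF i iI)); apply: imax.
    by move: iI; rewrite !inE => /andP [].
  rewrite sum_nat_const leq_mul2r; apply/orP; right.
  have h1 := max_card I; rewrite card_ord (cardsD1 i0 I) i0I in h1.
  rewrite -subn1; lia.
have [F' [iF' oF' sF' cF']] := greedyA iF F0 sumle (HA i0) (leqnn (r i0)).
exists F'; split => //.
  move=> i iI; case: (eqVneq i i0) => [-> // | ii0].
  by rewrite oF' //; apply: sF; rewrite !inE ii0.
move=> i iI; have ii0 : i != i0 by apply/eqP=> e; move: iI; rewrite e i0I.
by rewrite oF' //; apply: oF; rewrite !inE negb_and iI orbT.
Qed.

Lemma phaseB_out i (X : seq V) F : uniq X -> {subset X <= Hout i} -> Inv F ->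
  (forall e, e \in F i -> e.1 \notin X) -> (forall e, e \in F i -> e.2 \notin Hin i) ->
  2 * (sumF F + size X) + #|Hin i| <= l ->
  exists F', [/\ Inv F', forall j, j != i -> F' j = F j, #|F' i| = #|F i| + size X
   & forall e, e \in F' i -> e.2 \notin Hin i].
Proof.
elim: X F => [|a X IH] F uX sX iF hX hH hb.
  by exists F; split => //; rewrite addn0.
move: uX => /= /andP [aX uX].
have aH : a \in Hout i by apply: sX; rewrite mem_head.
set S := touched (\bigcup_(j < k) F j).
have cS : #|S :|: Hin i| <= l.
  apply: leq_trans (leq_card_setU _ _).1 _; apply: leq_trans hb.
  rewrite leq_add2r; apply: leq_trans (touched_le F) _; rewrite leq_mul2l leq_addr orbT //.
case: (boolP ([set y | (a, y) \in G i] \subset S :|: Hin i)).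
  move=> /subset_leq_card; move: aH; rewrite inE => aH.
  by move=> h; move: (leq_trans h cS); rewrite leqNgt -/(outdeg _ _) aH.
move=> /subsetPn [z]; rewrite inE => hz; rewrite inE negb_or => /andP [zS zH].
have ha : forall e, e \in F i -> e.1 != a.
  by move=> e he; apply/eqP=> ea; have := hX e he; rewrite ea mem_head.
have [iF1 nF] := step iF hz ha (fun e' h => proj2 (andP (untouched_class zS h)))
  (introT orP (or_introl zS)).
set F1 := upd F i ((a, z) |: F i).
have sX' : {subset X <= Hout i} by move=> x xX; apply: sX; rewrite inE xX orbT.
have hX' : forall e, e \in F1 i -> e.1 \notin X.
  move=> e; rewrite /F1 upd_same !inE => /orP [/eqP -> //= | he].
  by apply/negP=> h; have := hX e he; rewrite inE h orbT.
have hH' : forall e, e \in F1 i -> e.2 \notin Hin i.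
  move=> e; rewrite /F1 upd_same in_setU1 => /orP [/eqP -> //= | he].
  exact: hH.
have sum1 : sumF F1 = (sumF F).+1.
  have := sumF_gen (fun j (h : j != i) => upd_other F ((a, z) |: F i) h).
  rewrite upd_same cardsU1 nF /= => h; rewrite /F1; lia.
have hb' : 2 * (sumF F1 + size X) + #|Hin i| <= l by rewrite sum1 addSn -addnS.
have [F' [iF' oF' cF' hF']] := IH F1 uX sX' iF1 hX' hH' hb'.
exists F'; split => //.
  by move=> j ji; rewrite oF' // /F1 upd_other.
by rewrite cF' /F1 upd_same cardsU1 nF /= addSn addnS.
Qed.

Lemma phaseB_in i (Y : seq V) F : uniq Y -> {subset Y <= Hin i} -> Inv F ->
  (forall e, e \in F i -> e.2 \notin Y) ->
  2 * (sumF F + size Y) <= l ->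
  exists F', [/\ Inv F', forall j, j != i -> F' j = F j & #|F' i| = #|F i| + size Y].
Proof.
elim: Y F => [|b Y IH] F uY sY iF hY hb.
  by exists F; split => //; rewrite addn0.
move: uY => /= /andP [bY uY].
have bH : b \in Hin i by apply: sY; rewrite mem_head.
set S := touched (\bigcup_(j < k) F j).
have cS : #|S| <= l.
  apply: leq_trans hb; apply: leq_trans (touched_le F) _; rewrite leq_mul2l leq_addr orbT //.
case: (boolP ([set x | (x, b) \in G i] \subset S)).
  move=> /subset_leq_card; move: bH; rewrite inE => bH.
  by move=> h; move: (leq_trans h cS); rewrite leqNgt -/(indeg _ _) bH.
move=> /subsetPn [z]; rewrite inE => hz zS.
have hb1 : forall e, e \in F i -> e.2 != b.
  by move=> e he; apply/eqP=> eb; have := hY e he; rewrite eb mem_head.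
have [iF1 nF] := step iF hz (fun e' h => proj1 (andP (untouched_class zS h))) hb1
  (introT orP (or_intror zS)).
set F1 := upd F i ((z, b) |: F i).
have sY' : {subset Y <= Hin i} by move=> x xY; apply: sY; rewrite inE xY orbT.
have hY' : forall e, e \in F1 i -> e.2 \notin Y.
  move=> e; rewrite /F1 upd_same !inE => /orP [/eqP -> //= | he].
  by apply/negP=> h; have := hY e he; rewrite inE h orbT.
have sum1 : sumF F1 = (sumF F).+1.
  have := sumF_gen (fun j (h : j != i) => upd_other F ((z, b) |: F i) h).
  rewrite upd_same cardsU1 nF /= => h; rewrite /F1; lia.
have hb' : 2 * (sumF F1 + size Y) <= l by rewrite sum1 addSn -addnS.
have [F' [iF' oF' cF']] := IH F1 uY sY' iF1 hY' hb'.
exists F'; split => //.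
  by move=> j ji; rewrite oF' // /F1 upd_other.
by rewrite cF' /F1 upd_same cardsU1 nF /= addSn addnS.
Qed.

Lemma phaseB_all (J : seq 'I_k) F : uniq J -> Inv F ->
  (forall i, i \in J -> forall e, e \in F i -> (e.1 \notin Hout i) && (e.2 \notin Hin i)) ->
  (forall i, 2 * (sumF F + \sum_(j <- J) h j) + #|Hin i| <= l) ->
  exists F', [/\ Inv F', forall i, #|F' i| = #|F i| + (if i \in J then h i else 0),
    forall i, i \notin J -> F' i = F i & sumF F' = sumF F + \sum_(j <- J) h j].
Proof.
elim: J F => [|i J IH] F uJ iF pre hb.
  by exists F; split => // [i|]; rewrite ?big_nil ?addn0 //= ?in_nil addn0.
move: uJ => /= /andP [iJ uJ].
have pre' : forall j, j \in J -> forall e, e \in F j -> (e.1 \notin Hout j) && (e.2 \notin Hin j).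
  by move=> j jJ; apply: pre; rewrite inE jJ orbT.
have hb' : forall j, 2 * (sumF F + \sum_(j0 <- J) h j0) + #|Hin j| <= l.
  move=> j; apply: leq_trans (hb j); rewrite leq_add2r leq_mul2l big_cons; lia.
have [F1 [iF1 c1 o1 s1]] := IH F uJ iF pre' hb'.
have F1i : F1 i = F i by apply: o1.
have hbi := hb i; rewrite big_cons in hbi.
have [F2 [iF2 o2 c2 h2]] := @phaseB_out i (enum (Hout i)) F1 (enum_uniq _)
  (fun x => ltac:(rewrite mem_enum; exact: id)) iF1
  (fun e he => ltac:(rewrite mem_enum; rewrite F1i in he; by case/andP: (pre i (mem_head _ _) e he)))
  (fun e he => ltac:(rewrite F1i in he; by case/andP: (pre i (mem_head _ _) e he)))
  ltac:(rewrite -cardE s1; move: hbi; rewrite /h; lia).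
have s2 : sumF F2 = sumF F1 + #|Hout i|.
  by have := sumF_gen o2; rewrite c2 -cardE; lia.
have [F3 [iF3 o3 c3]] := @phaseB_in i (enum (Hin i)) F2 (enum_uniq _)
  (fun x => ltac:(rewrite mem_enum; exact: id)) iF2
  (fun e he => ltac:(rewrite mem_enum; exact: h2 e he))
  ltac:(rewrite -cardE s2 s1; move: hbi; rewrite /h; lia).
have s3 : sumF F3 = sumF F2 + #|Hin i|.
  by have := sumF_gen o3; rewrite c3 -cardE; lia.
exists F3; split => //.
- move=> j; case: (eqVneq j i) => [-> | ji].
    rewrite c3 c2 -!cardE F1i inE eqxx /=; rewrite /h; lia.
  by rewrite o3 // o2 // c1 inE (negbTE ji).
- move=> j; rewrite inE negb_or => /andP [ji jJ].
  by rewrite o3 // o2 // o1.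
- by rewrite s3 s2 s1 big_cons /h; lia.
Qed.

Lemma core (HA : forall i, 0 < r i -> 4 * k * l * r i <= #|LL i| /\ 0 < #|LL i|)
  (HB : forall i, 2 * (\sum_(j < k) (r j + h j)) + #|Hin i| <= l) :
  exists F, Inv F /\ forall i, m i <= #|F i|.
Proof.
have [F [iF sF _]] := phaseA HA setT.
have sumA : sumF F = \sum_(j < k) r j.
  by apply: eq_bigr => j _; rewrite (proj2 (sF j (in_setT j))).
have [F' [iF' cF' _ _]] := @phaseB_all (index_enum 'I_k) F (index_enum_uniq _) iF
  (fun i _ e he => ltac:(have := subsetP (proj1 (sF i (in_setT i))) e he; rewrite inE => /andP [] //))
  (fun i => ltac:(rewrite sumA -big_split /=; exact: HB i)).
exists F'; split => // i; rewrite cF' mem_index_enum (proj2 (sF i (in_setT i))) /r; lia.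
Qed.

Lemma card_G_split i : #|G i| <= #|LL i| + \sum_(v in Hout i) outdeg (G i) v
  + \sum_(v in Hin i) indeg (G i) v.
Proof.
rewrite -card_tail -card_head.
apply: leq_trans (subset_leq_card (_ : G i \subset LL i :|: [set e in G i | e.1 \in Hout i]
   :|: [set e in G i | e.2 \in Hin i])) _.
  apply/subsetP=> e he; rewrite !inE he /=.
  by case: (l < outdeg (G i) e.1); case: (l < indeg (G i) e.2); rewrite ?orbT.
apply: leq_trans (leq_card_setU _ _).1 _; rewrite leq_add2r.
exact: (leq_card_setU _ _).1.
Qed.

Lemma Hout_bound i : l.+1 * #|Hout i| <= #|G i|.
Proof.
apply: leq_trans (sum_outdeg_le (G i) (Hout i)).
rewrite mulnC -sum_nat_const; apply: leq_sum => v; rewrite inE //.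
Qed.

Lemma Hin_bound i : l.+1 * #|Hin i| <= #|G i|.
Proof.
apply: leq_trans (sum_indeg_le (G i) (Hin i)).
rewrite mulnC -sum_nat_const; apply: leq_sum => v; rewrite inE //.
Qed.

End Core.

End Part3.
Import Part3.

Module PartA.

Section Arith.
Variable R : realType.
Local Open Scope ring_scope.

Lemma arith (K N L lam : R) : 1 <= K -> 1 <= N -> 25 * N <= 2 * lam ^+ 2 ->
  lam < L + 1 -> 0 <= L -> 0 <= lam ->
  2 * N / (4 * K * lam) + 5 * N / (L + 1) <= L.
Proof.
move=> K1 N1 hN hL L0 l0.
have l3 : 3 <= lam by nra.
have t1 : 2 * N / (4 * K * lam) <= lam / 25.
  rewrite ler_pdivrMr; last by nra.
  rewrite mulrAC ler_pdivlMr //; nra.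
have t2 : 5 * N / (L + 1) <= 2 * lam / 5.
  rewrite ler_pdivrMr; last by lra.
  nra.
lra.
Qed.
End Arith.

End PartA.
Import PartA.

Theorem lemma4p3 (R : realType) (k : nat) (alpha : R) :
  (0 < alpha)%R -> (alpha < 1)%R ->
  exists gamma0 : R, (0 < gamma0)%R /\
  forall gamma : R, (0 < gamma)%R -> (gamma <= gamma0)%R ->
  forall (n : nat) (E : {set 'I_n * 'I_n}) (G : 'I_k -> {set 'I_n * 'I_n}),
    loopless E ->
    (forall i, G i \subset E) ->
    (forall i j, i != j -> [disjoint G i & G j]) ->
    ((\sum_(i < k) #|G i|)%:R <= gamma * (n%:R) ^+ 2)%R ->
    (forall i, maxsemideg_le (G i) (alpha * n%:R)%R) ->
    exists Q : 'I_k -> seq (seq 'I_n),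
      (forall i, path_system (G i) (Q i)) /\
      ~ has_dcycle (\bigcup_(i < k) ps_edges (Q i)) /\
      (forall i, (Num.floor ((#|G i|)%:R / (alpha * n%:R)) <= (#|ps_edges (Q i)|)%:Z)%R).
Proof.
move=> a0 a1.
pose K : R := ((k.+1)%:R)%R.
have K1 : (1 <= K)%R by rewrite /K ler1n.
exists (alpha ^+ 2 / (200 * K ^+ 2))%R; split.
  by apply: divr_gt0; [exact: exprn_gt0 | nra].
move=> gamma g0 gle n E G lE sGE _ hsum hdeg.
have loopG : forall i v, (v, v) \notin G i.
  by move=> i v; apply/negP => h; have := lE v; rewrite (subsetP (sGE i) _ h).
case: (posnP n) => [n0 | npos].
  exists (fun _ => [::]); split => //; split.
    move=> [c /and3P [c0 _ _]]; case: c c0 => // x _ _.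
    by case: x => x; rewrite n0.
  move=> i; have -> : (n%:R = 0 :> R)%R by rewrite n0.
  by rewrite mulr0 invr0 mulr0 floor0.

set D := (alpha * n%:R)%R.
have D0 : (0 < D)%R by rewrite /D mulr_gt0 // ltr0n.
have K0 : (0 < K)%R by apply: lt_le_trans K1; exact: ltr01.
pose lam := (D / (4 * K))%R.
have lam0 : (0 <= lam)%R by rewrite /lam; apply: divr_ge0; [exact: ltW | nra].
pose l := Num.truncn lam.
have hl1 : (l%:R <= lam)%R by rewrite truncn_le.
have hl2 : (lam < l.+1%:R)%R by apply: truncnS_gt.
pose m := fun i => Num.truncn ((#|G i|)%:R / D)%R.
have hmD : forall i, ((m i)%:R <= #|G i|%:R / D)%R.
  by move=> i; rewrite truncn_le divr_ge0 // ltW.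
have hm : forall i, ((m i)%:R * D <= #|G i|%:R)%R.
  by move=> i; rewrite -ler_pdivlMr.
have l4 : (4%:R * K * l%:R <= D)%R.
  have := hl1; rewrite /lam ler_pdivlMr; last by rewrite mulr_gt0 // ltr0n.
  by rewrite mulrC.
have kK : ((k%:R : R) <= K)%R by rewrite /K ler_nat.
have HA : forall i, 0 < r G l m i -> 4 * k * l * r G l m i <= #|LL G l i| /\ 0 < #|LL G l i|.
  move=> i ri.
  have so : ((\sum_(v in Hout G l i) outdeg (G i) v)%:R <= #|Hout G l i|%:R * D)%R.
    rewrite natr_sum; apply: le_trans (_ : \sum_(v in Hout G l i) D <= _)%R.
      by apply: ler_sum => v _; exact: (hdeg i v).1.
    by rewrite sumr_const mulr_natl.
  have si : ((\sum_(v in Hin G l i) indeg (G i) v)%:R <= #|Hin G l i|%:R * D)%R.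
    rewrite natr_sum; apply: le_trans (_ : \sum_(v in Hin G l i) D <= _)%R.
      by apply: ler_sum => v _; exact: (hdeg i v).2.
    by rewrite sumr_const mulr_natl.
  have hs := card_G_split G l i; rewrite -(ler_nat R) !natrD in hs.
  have hmi := hm i.
  have hle : (h G l i < m i)%N by move: ri; rewrite /r subn_gt0.
  have rR : ((r G l m i)%:R = (m i)%:R - (#|Hout G l i|%:R + #|Hin G l i|%:R) :> R)%R.
    by rewrite /r natrB ?(ltnW hle) // /h natrD.
  have hLL : ((r G l m i)%:R * D <= #|LL G l i|%:R)%R.
    rewrite rR mulrBl mulrDl; lra.
  have r1 : (1 <= (r G l m i)%:R :> R)%R by rewrite ler1n.
  split.
    rewrite -(ler_nat R) !natrM; apply: le_trans hLL.
    rewrite [X in (_ <= X)%R]mulrC; apply: ler_wpM2r => //.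
    apply: le_trans l4; apply: ler_wpM2r => //; apply: ler_wpM2l => //.
  rewrite -(ltr_nat R); apply: lt_le_trans hLL; nra.
have HB : forall i, 2 * (\sum_(j < k) (r G l m j + h G l j)) + #|Hin G l i| <= l.
  move=> i.
  set N := \sum_(j < k) #|G j|.
  have lp : (0 < l.+1%:R :> R)%R by rewrite ltr0n.
  have bj : forall j, ((r G l m j + h G l j)%:R <= #|G j|%:R * D^-1 + #|G j|%:R * (2 / l.+1%:R))%R.
    move=> j; apply: le_trans (_ : ((m j)%:R + (#|Hout G l j|%:R + #|Hin G l j|%:R) <= _)%R).
      by rewrite -!natrD ler_nat /h leq_add2r /r leq_subr.
    apply: lerD; first exact: hmD.
    have ho := Hout_bound G l j; have hi := Hin_bound G l j.
    rewrite -(ler_nat R) natrM in ho; rewrite -(ler_nat R) natrM in hi.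
    have -> : (#|G j|%:R * (2 / l.+1%:R) = #|G j|%:R / l.+1%:R + #|G j|%:R / l.+1%:R :> R)%R.
      by field; rewrite addrC natr1 pnatr_eq0.
    by apply: lerD; rewrite ler_pdivlMr // mulrC.
  have sb : ((\sum_(j < k) (r G l m j + h G l j))%:R <= N%:R * D^-1 + N%:R * (2 / l.+1%:R))%R.
    rewrite natr_sum; apply: le_trans (ler_sum _ (fun j _ => bj j)) _.
    by rewrite big_split /= -!mulr_suml -natr_sum.
  have Gi : (#|G i| <= N)%N by rewrite /N (bigD1 i) //= leq_addr.
  have hb : (#|Hin G l i|%:R <= N%:R / l.+1%:R :> R)%R.
    rewrite ler_pdivlMr // mulrC -natrM ler_nat; exact: leq_trans (Hin_bound G l i) Gi.
  rewrite -(ler_nat R) natrD natrM.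
  case: (posnP N) => [N0 | Npos].
    move: sb hb; rewrite N0 !mul0r addr0 => sb hb.
    have : (0 <= l%:R :> R)%R by [].
    rewrite natr_sum in sb *; lra.
  have N1 : (1 <= N%:R :> R)%R by rewrite ler1n.
  have Kn0 : (K != 0)%R by rewrite gt_eqF.
  have e0 : (alpha ^+ 2 / (200 * K ^+ 2) * n%:R ^+ 2 = D ^+ 2 / (200 * K ^+ 2))%R.
    by rewrite /D; field; rewrite addrC natr1 pnatr_eq0.
  have hN : (N%:R <= D ^+ 2 / (200 * K ^+ 2))%R.
    rewrite -e0; apply: le_trans hsum _; apply: ler_wpM2r => //; rewrite exprn_ge0 // ler0n.
  have e1 : (2 * lam ^+ 2 = 25 * (D ^+ 2 / (200 * K ^+ 2)))%R.
    by rewrite /lam; field; rewrite addrC natr1 pnatr_eq0.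
  have h25 : (25 * N%:R <= 2 * lam ^+ 2)%R.
    by rewrite e1; apply: ler_wpM2l.
  have hl2' : (lam < l%:R + 1)%R by rewrite natr1.
  have ar := @arith R K N%:R l%:R lam K1 N1 h25 hl2' (ler0n _ _) lam0.
  have e4 : (4 * K * lam = D)%R.
    by rewrite /lam; field; rewrite addrC natr1 pnatr_eq0.
  rewrite e4 in ar.
  have el : ((l.+1)%:R = l%:R + 1 :> R)%R by rewrite natr1.
  rewrite el in sb hb.
  have ea : (2 * N%:R / D = 2 * (N%:R / D))%R by ring.
  have eb : (5 * N%:R / (l%:R + 1) = 5 * (N%:R / (l%:R + 1)) :> R)%R by ring.
  have ec : (N%:R * (2 / (l%:R + 1)) = 2 * (N%:R / (l%:R + 1)) :> R)%R by ring.
  rewrite ea eb in ar; rewrite ec in sb.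
  lra.
have [F [[sFG dF nc] cF]] := core loopG HA HB.
have ex : forall i, exists P : seq (seq 'I_n), path_system (F i) P && (ps_edges P == F i).
  move=> i; have nci : ~ has_dcycle (F i).
    by move=> hc; apply: nc; exact: has_dcycle_sub (sub_bigcup F i) hc.
  have [P [p1 p2 _]] := to_paths (dF i) nci.
  by exists P; rewrite p1 p2 eqxx.
pose Q i := xchoose (ex i).
have hQ : forall i, path_system (F i) (Q i) && (ps_edges (Q i) == F i).
  by move=> i; exact: (xchooseP (ex i)).
exists Q; split; [|split].
- move=> i; have /andP [/andP [a u] _] := hQ i; apply/andP; split => //.
  by apply: sub_all a => p; exact: dpath_sub (sFG i).
- rewrite (eq_bigr (fun i => F i)) //; move=> i _; by have /andP [_ /eqP] := hQ i.
- move=> i; have /andP [_ /eqP ->] := hQ i.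
  apply: (@le_trans _ _ ((m i)%:Z)%R); last by rewrite lez_nat cF.
  rewrite -ltzD1 floor_lt_int intrD mulr1z.
  have -> : ((((m i)%:Z)%:~R = (m i)%:R :> R))%R by [].
  by rewrite natr1; apply: truncnS_gt.
Qed.
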